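(* There is an absolute constant $C>0$ (independent of $n$, $f$, $g$, $x$) such that for all real-valued $f,g\in C^{3}[0,1]$, all $x\in[0,1]$ and $n\in\mathbb{N}$, $$n\left|B_{n}(fg)(x)-B_{n}(f)(x)B_{n}(g)(x)-\frac{x(1-x)}{n}f'(x)g'(x)\right|\le C\,x(1-x)\frac{1}{\sqrt{n}}\max\{\|f\|,\|f'''\|\}\cdot\max\{\|g\|,\|g'''\|\}.$$
   Context: For $f:[0,1]\to\mathbb{R}$ the Bernstein polynomials are $B_{n}(f)(x)=\sum_{k=0}^{n}\binom{n}{k}x^{k}(1-x)^{n-k}f(k/n)$. $\|\cdot\|$ denotes the uniform norm on $C[0,1]$. *)

(* Defs.v *)
From Stdlib Require Import Reals.
From Coquelicot Require Import Coquelicot.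
Open Scope R_scope.

Definition bernstein (n : nat) (f : R -> R) (x : R) : R :=
  sum_f_R0 (fun k => Binomial.C n k * x ^ k * (1 - x) ^ (n - k) * f (INR k / INR n)) n.

Definition has_deriv_01 (h h' : R -> R) : Prop :=
  forall x, 0 <= x <= 1 -> forall eps, 0 < eps -> exists delta, 0 < delta /\
    forall y, 0 <= y <= 1 -> y <> x -> Rabs (y - x) < delta ->
      Rabs ((h y - h x) / (y - x) - h' x) < eps.

Definition cont_01 (h : R -> R) : Prop :=
  forall x, 0 <= x <= 1 -> forall eps, 0 < eps -> exists delta, 0 < delta /\
    forall y, 0 <= y <= 1 -> Rabs (y - x) < delta -> Rabs (h y - h x) < eps.

Definition C3_01 (f f1 f2 f3 : R -> R) : Prop :=
  has_deriv_01 f f1 /\ has_deriv_01 f1 f2 /\ has_deriv_01 f2 f3 /\ cont_01 f3.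

Definition supnorm (h : R -> R) : R :=
  real (Lub_Rbar (fun r => exists t, 0 <= t <= 1 /\ r = Rabs (h t))).

(* Main.v *)
Require Import Defs.
From Stdlib Require Import Reals Lra Lia.
From Coquelicot Require Import Coquelicot.
Open Scope R_scope.


Definition clamp (t : R) : R := Rmax 0 (Rmin 1 t).

Lemma clamp_in t : 0 <= clamp t <= 1.
Proof. unfold clamp, Rmax, Rmin; repeat destruct Rle_dec; lra. Qed.

Lemma clamp_id t : 0 <= t <= 1 -> clamp t = t.
Proof. intros; unfold clamp, Rmax, Rmin; repeat destruct Rle_dec; lra. Qed.

Lemma clamp_lip a b : Rabs (clamp a - clamp b) <= Rabs (a - b).
Proof. unfold clamp, Rmax, Rmin; repeat destruct Rle_dec; apply Rabs_le; split;
  try (apply Rabs_le_between; lra); pose proof (Rabs_le_between (a-b) (Rabs (a-b))) as [H _];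
  specialize (H (Rle_refl _)); lra.
Qed.

Definition cc (h : R -> R) : Prop := forall t, continuity_pt (fun u => h (clamp u)) t.

Lemma cont01_cc h : cont_01 h -> cc h.
Proof.
  intros H t eps Heps.
  destruct (H (clamp t) (clamp_in t) eps Heps) as [d [Hd Hd']].
  exists d; split; auto. intros y [_ Hy]. unfold R_dist in *. simpl.
  simpl in Hy. unfold R_dist in Hy. apply Hd'. apply clamp_in. pose proof (clamp_lip y t). lra.
Qed.

Lemma clamp_cont t : continuity_pt clamp t.
Proof.
  intros eps Heps. exists eps; split; auto. intros y [_ Hy]. simpl in *. unfold R_dist in *.
  pose proof (clamp_lip y t). lra.
Qed.

Lemma cc_plus h P : cc h -> (forall t, continuity_pt P t) -> cc (fun t => h t + P t).
Proof.
  intros H HP t. apply continuity_pt_plus; [apply H|].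
  apply (continuity_pt_comp clamp P t (clamp_cont t) (HP _)).
Qed.

Lemma deriv01_cont h h' : has_deriv_01 h h' -> cont_01 h.
Proof.
  intros H x Hx eps Heps.
  destruct (H x Hx 1 Rlt_0_1) as [d [Hd Hd']].
  set (K := Rabs (h' x) + 1).
  assert (HK : 0 < K) by (unfold K; pose proof (Rabs_pos (h' x)); lra).
  exists (Rmin d (eps / K)). split.
  { apply Rmin_pos; auto. apply Rdiv_lt_0_compat; auto. }
  intros y Hy Hyx.
  destruct (Req_dec y x) as [->|Hne].
  { rewrite Rminus_diag, Rabs_R0; auto. }
  assert (Hyd : Rabs (y - x) < d) by (pose proof (Rmin_l d (eps/K)); lra).
  assert (Hye : Rabs (y - x) < eps / K) by (pose proof (Rmin_r d (eps/K)); lra).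
  specialize (Hd' y Hy Hne Hyd).
  assert (Hq : Rabs ((h y - h x) / (y - x)) <= K).
  { unfold K. pose proof (Rabs_triang ((h y - h x) / (y - x) - h' x) (h' x)).
    replace ((h y - h x) / (y - x) - h' x + h' x) with ((h y - h x) / (y - x)) in H0 by ring. lra. }
  assert (Hyx0 : y - x <> 0) by lra.
  replace (h y - h x) with ((h y - h x) / (y - x) * (y - x)) by (field; auto).
  rewrite Rabs_mult.
  apply Rle_lt_trans with (K * Rabs (y - x)).
  { apply Rmult_le_compat_r; auto. apply Rabs_pos. }
  replace eps with (K * (eps / K)) by (field; lra).
  apply Rmult_lt_compat_l; auto.
Qed.

Lemma deriv01_int h h' c : has_deriv_01 h h' -> 0 < c < 1 -> is_derive h c (h' c).
Proof.
  intros H Hc. apply is_derive_Reals. intros eps Heps.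
  destruct (H c ltac:(lra) eps Heps) as [d [Hd Hd']].
  assert (Hpos : 0 < Rmin d (Rmin c (1 - c))) by (repeat apply Rmin_pos; lra).
  exists (mkposreal _ Hpos). intros hh Hh Hhl. simpl in Hhl.
  pose proof (Rmin_l d (Rmin c (1 - c))). pose proof (Rmin_r d (Rmin c (1 - c))).
  pose proof (Rmin_l c (1 - c)). pose proof (Rmin_r c (1 - c)).
  apply Rabs_def2 in Hhl as Hb.
  replace hh with ((c + hh) - c) at 2 by ring.
  apply Hd'.
  - lra.
  - lra.
  - replace (c + hh - c) with hh by ring. lra.
Qed.

Lemma mvt01 h dh : cc h -> (forall c, 0 < c < 1 -> is_derive h c (dh c)) ->
  forall a b, 0 <= a <= 1 -> 0 <= b <= 1 ->
  exists c, Rmin a b <= c <= Rmax a b /\ h b - h a = dh c * (b - a).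
Proof.
  intros Hc Hd a b Ha Hb.
  destruct (MVT_gen (fun u => h (clamp u)) a b dh) as [c [Hcin Hceq]].
  - intros y Hy.
    assert (Hy01 : 0 < y < 1).
    { unfold Rmin, Rmax in Hy; repeat destruct Rle_dec in Hy; lra. }
    apply is_derive_ext_loc with h; [|apply Hd; auto].
    assert (Hpos : 0 < Rmin y (1 - y)) by (apply Rmin_pos; lra).
    exists (mkposreal _ Hpos). intros z Hz.
    change (Rabs (z - y) < Rmin y (1 - y)) in Hz.
    pose proof (Rmin_l y (1 - y)). pose proof (Rmin_r y (1 - y)).
    apply Rabs_def2 in Hz. rewrite clamp_id; auto. lra.
  - intros; apply Hc.
  - exists c; split; auto. rewrite !clamp_id in Hceq; auto.
Qed.

Lemma step h dh x B k : cc h -> (forall c, 0 < c < 1 -> is_derive h c (dh c)) ->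
  0 <= x <= 1 -> h x = 0 -> 0 <= B ->
  (forall c, 0 <= c <= 1 -> Rabs (dh c) <= B * Rabs (c - x) ^ k) ->
  forall t, 0 <= t <= 1 -> Rabs (h t) <= B * Rabs (t - x) ^ S k.
Proof.
  intros Hc Hd Hx H0 HB Hb t Ht.
  destruct (mvt01 h dh Hc Hd x t Hx Ht) as [c [Hcin Hceq]].
  assert (Hc01 : 0 <= c <= 1) by (unfold Rmin, Rmax in Hcin; repeat destruct Rle_dec in Hcin; lra).
  assert (Hcx : Rabs (c - x) <= Rabs (t - x)).
  { unfold Rmin, Rmax in Hcin; repeat destruct Rle_dec in Hcin;
    apply Rabs_le; pose proof (Rabs_le_between (t-x) (Rabs (t-x))) as [HH _];
    specialize (HH (Rle_refl _)); lra. }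
  replace (h t) with (dh c * (t - x)) by lra.
  rewrite Rabs_mult. simpl.
  rewrite (Rmult_comm (Rabs (t - x))), <- Rmult_assoc.
  apply Rmult_le_compat_r; [apply Rabs_pos|].
  apply Rle_trans with (B * Rabs (c - x) ^ k); auto.
  apply Rmult_le_compat_l; auto. apply pow_incr. split; auto. apply Rabs_pos.
Qed.

Lemma cc_bounded h : cc h -> exists B, forall t, 0 <= t <= 1 -> Rabs (h t) <= B.
Proof.
  intros Hc.
  destruct (continuity_ab_maj (fun u => Rabs (h (clamp u))) 0 1 ltac:(lra)) as [m [Hm _]].
  { intros c _. apply (continuity_pt_comp (fun u => h (clamp u)) Rabs c (Hc c) (Rcontinuity_abs _)). }
  exists (Rabs (h (clamp m))). intros t Ht. specialize (Hm t Ht). simpl in Hm.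
  rewrite clamp_id in Hm; auto.
Qed.

Lemma supnorm_prop h : cc h ->
  0 <= supnorm h /\ forall t, 0 <= t <= 1 -> Rabs (h t) <= supnorm h.
Proof.
  intros Hc. destruct (cc_bounded h Hc) as [B HB].
  unfold supnorm.
  destruct (Lub_Rbar_correct (fun r => exists t, 0 <= t <= 1 /\ r = Rabs (h t))) as [Hub Hlub].
  assert (Hle : Rbar_le (Lub_Rbar (fun r => exists t, 0 <= t <= 1 /\ r = Rabs (h t))) B).
  { apply Hlub. intros r [t [Ht ->]]. simpl. auto. }
  assert (Hge : forall t, 0 <= t <= 1 -> Rbar_le (Rabs (h t)) (Lub_Rbar (fun r => exists t, 0 <= t <= 1 /\ r = Rabs (h t)))).
  { intros t Ht. apply Hub. exists t; auto. }
  specialize (Hge 0 ltac:(lra)) as Hg0.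
  destruct (Lub_Rbar (fun r => exists t, 0 <= t <= 1 /\ r = Rabs (h t))) as [l| |]; simpl in *.
  - split. { apply Rle_trans with (Rabs (h 0)); auto. apply Rabs_pos. }
    intros t Ht. specialize (Hge t Ht). simpl in Hge. auto.
  - contradiction.
  - contradiction.
Qed.


Definition wt (n : nat) (x : R) (k : nat) : R :=
  if (k <=? n)%nat then Binomial.C n k * x ^ k * (1 - x) ^ (n - k) else 0.

Definition E (n : nat) (x : R) (phi : nat -> R) : R :=
  sum_f_R0 (fun k => Binomial.C n k * x ^ k * (1 - x) ^ (n - k) * phi k) n.

Lemma bern_E n f x : bernstein n f x = E n x (fun k => f (INR k / INR n)).
Proof. reflexivity. Qed.

Lemma E_wt n x phi : E n x phi = sum_f_R0 (fun k => wt n x k * phi k) n.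
Proof.
  unfold E; apply sum_eq; intros i Hi; unfold wt.
  replace (i <=? n)%nat with true; [reflexivity|symmetry; apply Nat.leb_le; lia].
Qed.

Lemma sum_ext_wt n x phi m : (n <= m)%nat ->
  sum_f_R0 (fun k => wt n x k * phi k) m = sum_f_R0 (fun k => wt n x k * phi k) n.
Proof.
  intros H; induction H; [reflexivity|].
  rewrite tech5, IHle. unfold wt.
  replace (S m <=? n)%nat with false; [ring|symmetry; apply Nat.leb_gt; lia].
Qed.

Lemma wt_pascal n x i :
  wt (S n) x (S i) = x * wt n x i + (1 - x) * wt n x (S i).
Proof.
  unfold wt.
  destruct (Nat.lt_trichotomy i n) as [Hlt|[Heq|Hgt]].
  - replace (S i <=? S n)%nat with true by (symmetry; apply Nat.leb_le; lia).
    replace (i <=? n)%nat with true by (symmetry; apply Nat.leb_le; lia).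
    replace (S i <=? n)%nat with true by (symmetry; apply Nat.leb_le; lia).
    rewrite <- pascal by lia.
    replace (S n - S i)%nat with (n - i)%nat by lia.
    replace (n - i)%nat with (S (n - S i)) by lia. simpl. ring.
  - subst i.
    replace (S n <=? S n)%nat with true by (symmetry; apply Nat.leb_le; lia).
    replace (n <=? n)%nat with true by (symmetry; apply Nat.leb_le; lia).
    replace (S n <=? n)%nat with false by (symmetry; apply Nat.leb_gt; lia).
    rewrite !C_n_n, !Nat.sub_diag. simpl. ring.
  - replace (S i <=? S n)%nat with false by (symmetry; apply Nat.leb_gt; lia).
    replace (i <=? n)%nat with false by (symmetry; apply Nat.leb_gt; lia).
    replace (S i <=? n)%nat with false by (symmetry; apply Nat.leb_gt; lia).
    ring.
Qed.

Lemma E_rec n x phi :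
  E (S n) x phi = (1 - x) * E n x phi + x * E n x (fun k => phi (S k)).
Proof.
  rewrite !E_wt.
  rewrite decomp_sum by lia. simpl pred.
  rewrite (sum_eq _ (fun i => x * (wt n x i * phi (S i)) + (1 - x) * (wt n x (S i) * phi (S i))))
    by (intros i _; rewrite wt_pascal; ring).
  rewrite sum_plus.
  rewrite (sum_eq (fun i => x * _) (fun i => (wt n x i * phi (S i)) * x))
    by (intros; ring).
  rewrite (sum_eq (fun i => (1 - x) * _) (fun i => (wt n x (S i) * phi (S i)) * (1 - x)))
    by (intros; ring).
  rewrite <- !scal_sum.
  rewrite <- (sum_ext_wt n x phi (S n)) by lia.
  rewrite (decomp_sum (fun k => wt n x k * phi k) (S n)) by lia. simpl pred.
  assert (wt (S n) x 0 = (1 - x) * wt n x 0).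
  { unfold wt. simpl. rewrite !C_n_0. rewrite Nat.sub_0_r. ring. }
  rewrite H. ring.
Qed.

Lemma E_ext n x phi psi : (forall k, (k <= n)%nat -> phi k = psi k) -> E n x phi = E n x psi.
Proof. intros H; unfold E; apply sum_eq; intros; rewrite H; auto. Qed.

Lemma E_plus n x phi psi : E n x (fun k => phi k + psi k) = E n x phi + E n x psi.
Proof. unfold E; rewrite <- sum_plus; apply sum_eq; intros; ring. Qed.

Lemma E_scal n x c phi : E n x (fun k => c * phi k) = c * E n x phi.
Proof. unfold E; rewrite scal_sum; apply sum_eq; intros; ring. Qed.

Lemma C_nonneg n k : 0 <= Binomial.C n k.
Proof.
  unfold Binomial.C. apply Rmult_le_pos; [apply pos_INR|].
  apply Rlt_le, Rinv_0_lt_compat, Rmult_lt_0_compat; apply lt_0_INR, Factorial.lt_O_fact.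
Qed.

Lemma E_le n x phi psi : 0 <= x <= 1 -> (forall k, (k <= n)%nat -> phi k <= psi k) ->
  E n x phi <= E n x psi.
Proof.
  intros Hx H; unfold E; apply sum_Rle; intros k Hk.
  apply Rmult_le_compat_l; [|auto].
  apply Rmult_le_pos; [apply Rmult_le_pos|]; [apply C_nonneg| apply pow_le; lra | apply pow_le; lra].
Qed.

Lemma E_abs_le n x phi psi : 0 <= x <= 1 -> (forall k, (k <= n)%nat -> Rabs (phi k) <= psi k) ->
  Rabs (E n x phi) <= E n x psi.
Proof.
  intros Hx H. apply Rabs_le. split.
  - replace (- E n x psi) with (E n x (fun k => (-1) * psi k)) by (rewrite E_scal; ring).
    apply E_le; auto. intros k Hk; specialize (H k Hk). apply Rabs_le_between in H. lra.
  - apply E_le; auto. intros k Hk; specialize (H k Hk). apply Rabs_le_between in H. lra.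
Qed.

Lemma E0 x phi : E 0 x phi = phi 0%nat.
Proof. unfold E. simpl. rewrite C_n_0. ring. Qed.

Definition mom n x j := E n x (fun k => INR k ^ j).

Lemma E_poly4 n x a0 a1 a2 a3 a4 :
  E n x (fun k => a0 + a1 * INR k + a2 * INR k ^ 2 + a3 * INR k ^ 3 + a4 * INR k ^ 4)
  = a0 * mom n x 0 + a1 * mom n x 1 + a2 * mom n x 2 + a3 * mom n x 3 + a4 * mom n x 4.
Proof.
  unfold mom.
  transitivity (E n x (fun k => a0 * INR k ^ 0 + a1 * INR k ^ 1 + a2 * INR k ^ 2 + a3 * INR k ^ 3 + a4 * INR k ^ 4)).
  { apply E_ext; intros; ring. }
  rewrite !E_plus, !E_scal. reflexivity.
Qed.

Lemma mom_rec n x j : mom (S n) x j = (1 - x) * mom n x j + x * E n x (fun k => (INR k + 1) ^ j).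
Proof. unfold mom. rewrite E_rec. f_equal. f_equal. apply E_ext. intros. rewrite S_INR. auto. Qed.

Lemma moments n x :
  mom n x 0 = 1 /\
  mom n x 1 = INR n * x /\
  mom n x 2 = INR n * x + INR n * (INR n - 1) * x ^ 2 /\
  mom n x 3 = INR n * x + 3 * INR n * (INR n - 1) * x ^ 2 + INR n * (INR n - 1) * (INR n - 2) * x ^ 3 /\
  mom n x 4 = INR n * x + 7 * INR n * (INR n - 1) * x ^ 2 + 6 * INR n * (INR n - 1) * (INR n - 2) * x ^ 3
      + INR n * (INR n - 1) * (INR n - 2) * (INR n - 3) * x ^ 4.
Proof.
  induction n as [|n IH].
  - unfold mom; rewrite !E0; simpl; repeat split; ring.
  - destruct IH as (H0 & H1 & H2 & H3 & H4).
    rewrite !mom_rec.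
    rewrite (E_ext n x (fun k => (INR k + 1) ^ 0) (fun k => 1 + 0 * INR k + 0 * INR k ^ 2 + 0 * INR k ^ 3 + 0 * INR k ^ 4)) by (intros; ring).
    rewrite (E_ext n x (fun k => (INR k + 1) ^ 1) (fun k => 1 + 1 * INR k + 0 * INR k ^ 2 + 0 * INR k ^ 3 + 0 * INR k ^ 4)) by (intros; ring).
    rewrite (E_ext n x (fun k => (INR k + 1) ^ 2) (fun k => 1 + 2 * INR k + 1 * INR k ^ 2 + 0 * INR k ^ 3 + 0 * INR k ^ 4)) by (intros; ring).
    rewrite (E_ext n x (fun k => (INR k + 1) ^ 3) (fun k => 1 + 3 * INR k + 3 * INR k ^ 2 + 1 * INR k ^ 3 + 0 * INR k ^ 4)) by (intros; ring).
    rewrite (E_ext n x (fun k => (INR k + 1) ^ 4) (fun k => 1 + 4 * INR k + 6 * INR k ^ 2 + 4 * INR k ^ 3 + 1 * INR k ^ 4)) by (intros; ring).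
    rewrite !E_poly4, H0, H1, H2, H3, H4, S_INR.
    repeat split; ring.
Qed.

Section Central.
Variables (n : nat) (x : R).
Hypothesis Hn : (1 <= n)%nat.
Let N := INR n.
Lemma N_pos : 0 < N.
Proof. unfold N. apply lt_0_INR. lia. Qed.

Lemma E_one : E n x (fun _ => 1) = 1.
Proof.
  destruct (moments n x) as [H0 _]. transitivity (mom n x 0); [|exact H0]. unfold mom.
  apply E_ext; intros; simpl; ring.
Qed.

Lemma E_Y1 : E n x (fun k => INR k / N - x) = 0.
Proof.
  destruct (moments n x) as (H0 & H1 & H2 & H3 & H4).
  pose proof N_pos.
  rewrite (E_ext n x _ (fun k => (-x) + (1/N) * INR k + 0 * INR k ^ 2 + 0 * INR k ^ 3 + 0 * INR k ^ 4))
    by (intros; field; lra).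
  rewrite E_poly4, H0, H1. fold N. field. lra.
Qed.

Lemma E_Y2 : E n x (fun k => (INR k / N - x) ^ 2) = x * (1 - x) / N.
Proof.
  destruct (moments n x) as (H0 & H1 & H2 & H3 & H4).
  pose proof N_pos.
  rewrite (E_ext n x _ (fun k => x ^ 2 + (-2 * x / N) * INR k + (1 / N ^ 2) * INR k ^ 2 + 0 * INR k ^ 3 + 0 * INR k ^ 4))
    by (intros; field; lra).
  rewrite E_poly4, H0, H1, H2. fold N. field. lra.
Qed.

Lemma E_Y4 : E n x (fun k => (INR k / N - x) ^ 4) = x * (1 - x) * (1 + 3 * (N - 2) * x * (1 - x)) / N ^ 3.
Proof.
  destruct (moments n x) as (H0 & H1 & H2 & H3 & H4).
  pose proof N_pos.
  rewrite (E_ext n x _ (fun k => x ^ 4 + (-4 * x ^ 3 / N) * INR k + (6 * x ^ 2 / N ^ 2) * INR k ^ 2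
       + (-4 * x / N ^ 3) * INR k ^ 3 + (1 / N ^ 4) * INR k ^ 4))
    by (intros; field; lra).
  rewrite E_poly4, H0, H1, H2, H3, H4. fold N. field. lra.
Qed.

Lemma E_Y4_le : 0 <= x <= 1 -> E n x (fun k => (INR k / N - x) ^ 4) <= 2 * (x * (1 - x)) / N ^ 2.
Proof.
  intros Hx. rewrite E_Y4. pose proof N_pos.
  assert (HN1 : 1 <= N) by (unfold N; apply (le_INR 1); lia).
  assert (Hpq : 0 <= x * (1 - x) <= 1/4).
  { split; [apply Rmult_le_pos; lra|]. pose proof (pow2_ge_0 (x - 1/2)). simpl in *. nra. }
  assert (1 + 3 * (N - 2) * x * (1 - x) <= 2 * N).
  { replace (1 + 3 * (N - 2) * x * (1 - x)) with (1 + 3 * (N * (x * (1 - x))) - 6 * (x * (1 - x))) by ring.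
    assert (N * (x * (1 - x)) <= N * (1/4)) by (apply Rmult_le_compat_l; lra). lra. }
  unfold Rdiv. apply Rle_trans with (x * (1 - x) * (2 * N) * / N ^ 3).
  - apply Rmult_le_compat_r. apply Rlt_le, Rinv_0_lt_compat, pow_lt; lra.
    apply Rmult_le_compat_l; lra.
  - right. field. lra.
Qed.
End Central.


Lemma der_plus_P h dh P dP : (forall c, 0 < c < 1 -> is_derive h c (dh c)) ->
  (forall c, is_derive P c (dP c)) ->
  forall c, 0 < c < 1 -> is_derive (fun t => h t + P t) c (dh c + dP c).
Proof. intros H1 H2 c Hc. apply (is_derive_plus h P); auto. Qed.

Lemma der_cont (P dP : R -> R) : (forall c, is_derive P c (dP c)) -> forall t, continuity_pt P t.
Proof.
  intros H t. 
  assert (Hc : continuous P t).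
  { apply (ex_derive_continuous (K:=R_AbsRing) (V:=R_NormedModule)). exists (dP t); auto. }
  apply continuity_pt_filterlim. exact Hc.
Qed.

Lemma Rabs_pow1 a : Rabs a ^ 1 = Rabs a.
Proof. ring. Qed.

Section C3.
Variables f f1 f2 f3 : R -> R.
Hypothesis HC : C3_01 f f1 f2 f3.
Let M := Rmax (supnorm f) (supnorm f3).

Lemma C3_facts : cc f /\ cc f1 /\ cc f2 /\
  (forall c, 0 < c < 1 -> is_derive f c (f1 c)) /\
  (forall c, 0 < c < 1 -> is_derive f1 c (f2 c)) /\
  (forall c, 0 < c < 1 -> is_derive f2 c (f3 c)) /\
  0 <= M /\ (forall t, 0 <= t <= 1 -> Rabs (f t) <= M) /\ (forall t, 0 <= t <= 1 -> Rabs (f3 t) <= M).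
Proof.
  destruct HC as (H0 & H1 & H2 & H3).
  assert (cf : cc f) by (apply cont01_cc; eapply deriv01_cont; eauto).
  assert (cf3 : cc f3) by (apply cont01_cc; auto).
  destruct (supnorm_prop f cf) as [Hs0 Hs].
  destruct (supnorm_prop f3 cf3) as [Ht0 Ht].
  pose proof (Rmax_l (supnorm f) (supnorm f3)). pose proof (Rmax_r (supnorm f) (supnorm f3)).
  fold M in H, H4.
  refine (conj cf (conj _ (conj _ (conj _ (conj _ (conj _ (conj _ (conj _ _)))))))).
  - apply cont01_cc; eapply deriv01_cont; eauto.
  - apply cont01_cc; eapply deriv01_cont; eauto.
  - intros; apply deriv01_int; auto.
  - intros; apply deriv01_int; auto.
  - intros; apply deriv01_int; auto.
  - lra.
  - intros t Ht'. specialize (Hs t Ht'). lra.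
  - intros t Ht'. specialize (Ht t Ht'). lra.
Qed.

Lemma taylor3 x t : 0 <= x <= 1 -> 0 <= t <= 1 ->
  Rabs (f t + (- f x - f1 x * (t - x) - f2 x * (t - x) ^ 2 / 2)) <= M * Rabs (t - x) ^ 3.
Proof.
  intros Hx Ht.
  destruct C3_facts as (cf & cf1 & cf2 & d0 & d1 & d2 & HM & Hf & Hf3).
  assert (S1 : forall t, 0 <= t <= 1 -> Rabs (f2 t + - f2 x) <= M * Rabs (t - x) ^ 1).
  { apply (step _ (fun c => f3 c + 0)); auto.
    - apply cc_plus; auto. intros; apply continuity_pt_const. intros a b; auto.
    - apply der_plus_P; auto. intros; auto_derive; auto.
    - ring.
    - intros c Hc. rewrite Rplus_0_r. simpl. rewrite Rmult_1_r. auto. }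
  assert (S2 : forall t, 0 <= t <= 1 -> Rabs (f1 t + (- f1 x - f2 x * (t - x))) <= M * Rabs (t - x) ^ 2).
  { apply (step _ (fun c => f2 c + - f2 x)); auto.
    - apply cc_plus; auto. apply (der_cont _ (fun _ => - f2 x)). intros; auto_derive; auto; ring.
    - apply der_plus_P; auto. intros; auto_derive; auto; ring.
    - ring. }
  revert t Ht. apply (step _ (fun c => f1 c + (- f1 x - f2 x * (c - x)))); auto.
  - apply cc_plus; auto. apply (der_cont _ (fun c => - f1 x - f2 x * (c - x))). intros; auto_derive; auto; field.
  - apply der_plus_P; auto. intros; auto_derive; auto; field.
  - unfold Rdiv; ring.
Qed.

Lemma landau x : 0 <= x <= 1 -> Rabs (f2 x) <= 67 * M /\ Rabs (f1 x) <= 18 * M.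
Proof.
  intros Hx.
  destruct C3_facts as (cf & cf1 & cf2 & d0 & d1 & d2 & HM & Hf & Hf3).
  assert (gen : forall d, (d = 1/4 \/ d = -1/4) -> 0 <= x + d <= 1 -> 0 <= x + 2 * d <= 1 ->
     Rabs (f2 x) <= 67 * M /\ Rabs (f1 x) <= 18 * M).
  { intros d Hd H1 H2.
    pose proof (taylor3 x (x + d) Hx H1) as A1.
    pose proof (taylor3 x (x + 2 * d) Hx H2) as A2.
    pose proof (Hf _ H1) as B1. pose proof (Hf _ H2) as B2. pose proof (Hf _ Hx) as B0.
    replace (x + d - x) with d in A1 by ring.
    replace (x + 2 * d - x) with (2 * d) in A2 by ring.
    destruct Hd as [-> | ->];
    [ replace (Rabs (1/4)) with (1/4) in * by (rewrite Rabs_pos_eq; lra);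
      replace (Rabs (2 * (1/4))) with (1/2) in * by (rewrite Rabs_pos_eq; lra)
    | replace (Rabs (-1/4)) with (1/4) in * by (rewrite Rabs_left; lra);
      replace (Rabs (2 * (-1/4))) with (1/2) in * by (rewrite Rabs_left; lra) ];
    apply Rabs_le_between in A1; apply Rabs_le_between in A2;
    apply Rabs_le_between in B1; apply Rabs_le_between in B2; apply Rabs_le_between in B0;
    simpl in A1, A2;
    assert (Rabs (f2 x) <= 67 * M) by (apply Rabs_le; split; lra);
    split; auto; apply Rabs_le_between in H; apply Rabs_le; split; lra. }
  destruct (Rle_dec x (1/2)).
  - apply (gen (1/4)); lra.
  - apply (gen (-1/4)); lra.
Qed.

Lemma taylor2 x t : 0 <= x <= 1 -> 0 <= t <= 1 ->
  Rabs (f t + (- f x - f1 x * (t - x))) <= 67 * M * Rabs (t - x) ^ 2.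
Proof.
  intros Hx Ht.
  destruct C3_facts as (cf & cf1 & cf2 & d0 & d1 & d2 & HM & Hf & Hf3).
  assert (S1 : forall t, 0 <= t <= 1 -> Rabs (f1 t + - f1 x) <= 67 * M * Rabs (t - x) ^ 1).
  { apply (step _ (fun c => f2 c + 0)); auto.
    - apply cc_plus; auto. intros; apply continuity_pt_const. intros a b; auto.
    - apply der_plus_P; auto. intros; auto_derive; auto.
    - ring.
    - lra.
    - intros c Hc. rewrite Rplus_0_r. simpl. rewrite Rmult_1_r. apply landau; auto. }
  revert t Ht. apply (step _ (fun c => f1 c + - f1 x)); auto.
  - apply cc_plus; auto. apply (der_cont _ (fun _ => - f1 x)). intros; auto_derive; auto; ring.
  - apply der_plus_P; auto. intros; auto_derive; auto; ring.
  - ring.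
  - lra.
Qed.
End C3.


Lemma cov_identity n x (F G Y Rf Rg : nat -> R) c d a b :
  (forall k, F k = c + a * Y k + Rf k) -> (forall k, G k = d + b * Y k + Rg k) ->
  E n x (fun _ => 1) = 1 -> E n x Y = 0 ->
  E n x (fun k => F k * G k) - E n x (fun k => F k) * E n x (fun k => G k)
  = a * b * E n x (fun k => Y k ^ 2) + a * E n x (fun k => Y k * Rg k)
    + b * E n x (fun k => Rf k * Y k) + E n x (fun k => Rf k * Rg k)
    - E n x Rf * E n x Rg.
Proof.
  intros HF HG H1 HY.
  rewrite (E_ext n x (fun k => F k * G k) (fun k => (c * d) * 1 + (c * b + d * a) * Y k + c * Rg k
     + d * Rf k + (a * b) * Y k ^ 2 + a * (Y k * Rg k) + b * (Rf k * Y k) + 1 * (Rf k * Rg k)))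
    by (intros; rewrite HF, HG; ring).
  rewrite (E_ext n x (fun k => F k) (fun k => c * 1 + a * Y k + 1 * Rf k))
    by (intros; rewrite HF; ring).
  rewrite (E_ext n x (fun k => G k) (fun k => d * 1 + b * Y k + 1 * Rg k))
    by (intros; rewrite HG; ring).
  rewrite !E_plus, !E_scal, H1, HY. ring.
Qed.

Lemma cube_amgm u s : 0 < s -> 0 <= u -> u ^ 3 <= (u ^ 2 / s + s * u ^ 4) / 2.
Proof.
  intros Hs Hu.
  assert (0 <= u ^ 2 * (1 - s * u) ^ 2 / s).
  { apply Rmult_le_pos; [apply Rmult_le_pos; apply pow2_ge_0|]. apply Rlt_le, Rinv_0_lt_compat; auto. }
  assert (u ^ 2 * (1 - s * u) ^ 2 / s = u ^ 2 / s + s * u ^ 4 - 2 * u ^ 3) by (field; lra).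
  lra.
Qed.

Lemma final_arith (N s P a b Kf Kg Mf Mg T1 T2 T3 T4 T5 e2 e4 : R) :
  1 <= N -> s * s = N -> 0 < s -> 0 <= P <= 1/4 -> 0 <= Mf -> 0 <= Mg ->
  Rabs a <= 18 * Mf -> Rabs b <= 18 * Mg -> Kf = 67 * Mf -> Kg = 67 * Mg ->
  e2 = P / N -> e4 <= 2 * P / N ^ 2 -> 0 <= e4 ->
  Rabs T1 <= Kg / (2 * s) * e2 + Kg * s / 2 * e4 ->
  Rabs T2 <= Kf / (2 * s) * e2 + Kf * s / 2 * e4 ->
  Rabs T3 <= Kf * Kg * e4 -> Rabs T4 <= Kf * e2 -> Rabs T5 <= Kg * e2 ->
  N * Rabs (a * b * e2 + a * T1 + b * T2 + T3 - T4 * T5 - P / N * a * b)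
  <= 20000 * P * (1 / s) * Mf * Mg.
Proof.
  intros HN Hs Hs0 HP HMf HMg Ha Hb HKf HKg He2 He4 He40 H1 H2 H3 H4 H5.
  set (w := 1 / s).
  assert (Hw : 0 < w) by (unfold w; apply Rdiv_lt_0_compat; lra).
  assert (Hw1 : w <= 1).
  { unfold w. assert (1 <= s) by nra. apply Rmult_le_reg_l with s; auto. field_simplify; lra. }
  assert (HsW : s * w = 1) by (unfold w; field; lra).
  assert (HNw : N * w ^ 2 = 1) by (rewrite <- Hs; simpl; nra).
  assert (E2 : e2 = P * w ^ 2) by (rewrite He2; apply Rmult_eq_reg_l with N; [|lra]; field_simplify; nra).
  assert (E4 : e4 <= 2 * P * w ^ 4).
  { assert (Hw2 : w ^ 2 = / N) by (apply Rmult_eq_reg_l with N; [rewrite HNw; field|]; lra).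
    replace (2 * P * w ^ 4) with (2 * P * (w ^ 2) ^ 2) by ring. rewrite Hw2.
    replace (2 * P * (/ N) ^ 2) with (2 * P / N ^ 2) by (field; lra). auto. }
  assert (HKf0 : 0 <= Kf) by lra. assert (HKg0 : 0 <= Kg) by lra.
  assert (B1 : Rabs T1 <= 3/2 * Kg * P * w ^ 3).
  { eapply Rle_trans; [apply H1|]. rewrite E2.
    replace (Kg / (2 * s)) with (Kg * w / 2) by (unfold w; field; lra).
    assert (Kg * s / 2 * e4 <= Kg * s / 2 * (2 * P * w ^ 4)).
    { apply Rmult_le_compat_l; auto. apply Rmult_le_pos; [apply Rmult_le_pos|]; lra. }
    assert (Kg * s / 2 * (2 * P * w ^ 4) = Kg * P * w ^ 3) by (transitivity (Kg * P * w ^ 3 * (s * w)); [field| rewrite HsW; ring]).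
    assert (Kg * w / 2 * (P * w ^ 2) = Kg * P * w ^ 3 / 2) by field. lra. }
  assert (B2 : Rabs T2 <= 3/2 * Kf * P * w ^ 3).
  { eapply Rle_trans; [apply H2|]. rewrite E2.
    replace (Kf / (2 * s)) with (Kf * w / 2) by (unfold w; field; lra).
    assert (Kf * s / 2 * e4 <= Kf * s / 2 * (2 * P * w ^ 4)).
    { apply Rmult_le_compat_l; auto. apply Rmult_le_pos; [apply Rmult_le_pos|]; lra. }
    assert (Kf * s / 2 * (2 * P * w ^ 4) = Kf * P * w ^ 3) by (transitivity (Kf * P * w ^ 3 * (s * w)); [field| rewrite HsW; ring]).
    assert (Kf * w / 2 * (P * w ^ 2) = Kf * P * w ^ 3 / 2) by field. lra. }
  assert (B3 : Rabs T3 <= 2 * Kf * Kg * P * w ^ 4).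
  { eapply Rle_trans; [apply H3|]. replace (2 * Kf * Kg * P * w ^ 4) with (Kf * Kg * (2 * P * w ^ 4)) by ring.
    apply Rmult_le_compat_l; auto. apply Rmult_le_pos; lra. }
  assert (B45 : Rabs (T4 * T5) <= 1/4 * Kf * Kg * P * w ^ 4).
  { rewrite Rabs_mult. rewrite E2 in H4, H5.
    apply Rle_trans with ((Kf * (P * w ^ 2)) * (Kg * (P * w ^ 2))).
    { apply Rmult_le_compat; auto; apply Rabs_pos. }
    replace (Kf * (P * w ^ 2) * (Kg * (P * w ^ 2))) with ((Kf * Kg * P * w ^ 4) * P) by ring.
    replace (1/4 * Kf * Kg * P * w ^ 4) with ((Kf * Kg * P * w ^ 4) * (1/4)) by ring.
    apply Rmult_le_compat_l; [|lra]. apply Rmult_le_pos; [apply Rmult_le_pos; [apply Rmult_le_pos|]|]; try lra. apply pow_le; lra. }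
  assert (Hid : a * b * e2 + a * T1 + b * T2 + T3 - T4 * T5 - P / N * a * b = a * T1 + b * T2 + T3 - T4 * T5).
  { rewrite He2. field. lra. }
  rewrite Hid.
  assert (Htri : Rabs (a * T1 + b * T2 + T3 - T4 * T5) <= Rabs a * Rabs T1 + Rabs b * Rabs T2 + Rabs T3 + Rabs (T4 * T5)).
  { unfold Rminus. eapply Rle_trans; [apply Rabs_triang|]. rewrite Rabs_Ropp.
    eapply Rplus_le_compat_r. eapply Rle_trans; [apply Rabs_triang|].
    eapply Rplus_le_compat_r. eapply Rle_trans; [apply Rabs_triang|]. rewrite !Rabs_mult. lra. }
  assert (A1 : Rabs a * Rabs T1 <= 18 * Mf * (3/2 * Kg * P * w ^ 3)).
  { apply Rmult_le_compat; auto; apply Rabs_pos. }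
  assert (A2 : Rabs b * Rabs T2 <= 18 * Mg * (3/2 * Kf * P * w ^ 3)).
  { apply Rmult_le_compat; auto; apply Rabs_pos. }
  assert (Hw4 : w ^ 4 <= w ^ 3).
  { replace (w ^ 4) with (w ^ 3 * w) by ring. rewrite <- (Rmult_1_r (w ^ 3)) at 2.
    apply Rmult_le_compat_l; [apply pow_le|]; lra. }
  assert (Hc : 0 <= Kf * Kg * P) by (apply Rmult_le_pos; [apply Rmult_le_pos|]; lra).
  assert (A3 : Kf * Kg * P * w ^ 4 <= Kf * Kg * P * w ^ 3) by (apply Rmult_le_compat_l; auto).
  assert (Habs : Rabs (a * T1 + b * T2 + T3 - T4 * T5) <= 20000 * Mf * Mg * P * w ^ 3).
  { subst Kf Kg.
    assert (Hq : 0 <= Mf * Mg * P * w ^ 3) by (apply Rmult_le_pos; [apply Rmult_le_pos; [apply Rmult_le_pos|]|]; try lra; apply pow_le; lra).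
    lra. }
  apply Rle_trans with (N * (20000 * Mf * Mg * P * w ^ 3)).
  { apply Rmult_le_compat_l; lra. }
  right. replace (N * (20000 * Mf * Mg * P * w ^ 3)) with ((N * w ^ 2) * (20000 * Mf * Mg * P * w)) by ring.
  rewrite HNw. fold w. ring.
Qed.

Lemma pow4_abs y : Rabs y ^ 4 = y ^ 4.
Proof. replace (Rabs y ^ 4) with ((Rabs y ^ 2) ^ 2) by ring. rewrite pow2_abs. ring. Qed.

Lemma rem_bound n x (Y R : nat -> R) K s : 0 <= x <= 1 -> 0 < s -> 0 <= K ->
  (forall k, (k <= n)%nat -> Rabs (R k) <= K * Rabs (Y k) ^ 2) ->
  Rabs (E n x (fun k => Y k * R k)) <= K / (2 * s) * E n x (fun k => Y k ^ 2) + K * s / 2 * E n x (fun k => Y k ^ 4).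
Proof.
  intros Hx Hs HK H.
  rewrite <- !E_scal, <- E_plus.
  apply E_abs_le; auto. intros k Hk.
  rewrite Rabs_mult.
  apply Rle_trans with (Rabs (Y k) * (K * Rabs (Y k) ^ 2)).
  { apply Rmult_le_compat_l; [apply Rabs_pos| auto]. }
  pose proof (cube_amgm (Rabs (Y k)) s Hs (Rabs_pos _)).
  rewrite pow2_abs, pow4_abs in H0.
  replace (Rabs (Y k) * (K * Rabs (Y k) ^ 2)) with (K * Rabs (Y k) ^ 3) by ring.
  apply Rle_trans with (K * ((Y k ^ 2 / s + s * Y k ^ 4) / 2)).
  { apply Rmult_le_compat_l; auto. }
  right. field. lra.
Qed.

Theorem corollary2p3 :
  exists C : R, 0 < C /\
    forall (f f1 f2 f3 g g1 g2 g3 : R -> R) (x : R) (n : nat),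
      C3_01 f f1 f2 f3 -> C3_01 g g1 g2 g3 ->
      0 <= x <= 1 -> (1 <= n)%nat ->
      INR n * Rabs (bernstein n (fun t => f t * g t) x
                    - bernstein n f x * bernstein n g x
                    - x * (1 - x) / INR n * f1 x * g1 x)
      <= C * (x * (1 - x)) * (1 / sqrt (INR n))
           * Rmax (supnorm f) (supnorm f3) * Rmax (supnorm g) (supnorm g3).
Proof.
  exists 20000. split; [lra|].
  intros f f1 f2 f3 g g1 g2 g3 x n Hf Hg Hx Hn.
  assert (HN1 : 1 <= INR n) by (apply (le_INR 1); lia).
  assert (HN0 : 0 < INR n) by lra.
  set (N := INR n) in *.
  set (Y := fun k => INR k / N - x).
  set (Rf := fun k => f (INR k / N) + (- f x - f1 x * (INR k / N - x))).
  set (Rg := fun k => g (INR k / N) + (- g x - g1 x * (INR k / N - x))).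
  assert (Hk01 : forall k, (k <= n)%nat -> 0 <= INR k / N <= 1).
  { intros k Hk. split. apply Rdiv_le_0_compat; [apply pos_INR| lra].
    apply Rmult_le_reg_r with N; auto. field_simplify; [|lra]. unfold N. apply le_INR; auto. }
  destruct (C3_facts f f1 f2 f3 Hf) as (_ & _ & _ & _ & _ & _ & HMf & _ & _).
  destruct (C3_facts g g1 g2 g3 Hg) as (_ & _ & _ & _ & _ & _ & HMg & _ & _).
  set (Mf := Rmax (supnorm f) (supnorm f3)) in *.
  set (Mg := Rmax (supnorm g) (supnorm g3)) in *.
  assert (HRf : forall k, (k <= n)%nat -> Rabs (Rf k) <= 67 * Mf * Rabs (Y k) ^ 2).
  { intros k Hk. apply (taylor2 f f1 f2 f3 Hf x (INR k / N) Hx (Hk01 k Hk)). }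
  assert (HRg : forall k, (k <= n)%nat -> Rabs (Rg k) <= 67 * Mg * Rabs (Y k) ^ 2).
  { intros k Hk. apply (taylor2 g g1 g2 g3 Hg x (INR k / N) Hx (Hk01 k Hk)). }
  assert (Hone : E n x (fun _ => 1) = 1) by (apply E_one; auto).
  assert (HY1 : E n x Y = 0) by (apply E_Y1; auto).
  pose proof (cov_identity n x (fun k => f (INR k / N)) (fun k => g (INR k / N)) Y Rf Rg
     (f x) (g x) (f1 x) (g1 x)) as Hcov.
  rewrite !bern_E. fold N.
  rewrite Hcov; auto.
  2:{ intros k. unfold Y, Rf. ring. }
  2:{ intros k. unfold Y, Rg. ring. }
  assert (Hs : 0 < sqrt N) by (apply sqrt_lt_R0; lra).
  pose proof (landau f f1 f2 f3 Hf x Hx) as [_ Ha].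
  pose proof (landau g g1 g2 g3 Hg x Hx) as [_ Hb].
  fold Mf in Ha. fold Mg in Hb.
  apply (final_arith N (sqrt N) (x * (1 - x)) (f1 x) (g1 x) (67 * Mf) (67 * Mg) Mf Mg
    _ _ _ _ _ (E n x (fun k => Y k ^ 2)) (E n x (fun k => Y k ^ 4))); auto.
  - apply sqrt_sqrt; lra.
  - split; [apply Rmult_le_pos; lra|]. pose proof (pow2_ge_0 (x - 1/2)). simpl in *. nra.
  - apply E_Y2; auto.
  - apply E_Y4_le; auto.
  - assert (H0 : E n x (fun _ => 0 * 1) <= E n x (fun k => Y k ^ 4)).
    { apply E_le; auto. intros k _. replace (Y k ^ 4) with ((Y k ^ 2) ^ 2) by ring.
      pose proof (pow2_ge_0 (Y k ^ 2)). lra. }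
    rewrite E_scal in H0. lra.
  - apply rem_bound; auto; lra.
  - rewrite (E_ext n x (fun k => Rf k * Y k) (fun k => Y k * Rf k)) by (intros; ring).
    apply rem_bound; auto; lra.
  - rewrite <- E_scal. apply E_abs_le; auto. intros k Hk. rewrite Rabs_mult.
    rewrite <- pow4_abs.
    replace (67 * Mf * (67 * Mg) * Rabs (Y k) ^ 4) with ((67 * Mf * Rabs (Y k) ^ 2) * (67 * Mg * Rabs (Y k) ^ 2)) by ring.
    apply Rmult_le_compat; auto; apply Rabs_pos.
  - rewrite <- E_scal. apply E_abs_le; auto. intros k Hk. rewrite <- pow2_abs. auto.
  - rewrite <- E_scal. apply E_abs_le; auto. intros k Hk. rewrite <- pow2_abs. auto.
Qed.
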